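(* A family $\mathcal F$ of safety constraints is a family with a universal detector if and only if there exists $C\subseteq\Omega$ such that (1) for every $P\in C$ and every $n\in N$, either $n\in P$ or $n^{-1}\cdot P\in C$; and (2) for every safety constraint $S$, $S\in\mathcal F$ if and only if $S=C_\omega(P)$ for some $P\in C$.
   Context: Fix a finite nonempty set $N$; $N^+$ the nonempty finite words, $N^{\mathbb N}$ the streams; $s[0{:}m]$ prefix of length $m$, $s[m{:}]$ suffix; $n^{-1}\cdot A=\{u:nu\in A\}$; a set of words is prefix-free if no proper prefix (including the empty word) of a member is a member. A safety constraint is a set $S\subseteq N^{\mathbb N}$ such that any $s$ with ''for every $m$ there is $s'\in S$ with $s'[0{:}m]=s[0{:}m]$'' belongs to $S$. Let $\mathbf 1=\{\Downarrow\}$. A detector is a set $|a|$ with $a:|a|\to(\mathbf 1+|a|)^N$. The final detector $\omega$ has carrier $\Omega$ = the set of prefix-free subsets of $N^+$, with $\omega(P)(n)=\Downarrow$ if $n\in P$, else $n^{-1}\cdot P$. For $s\in N^{\mathbb N}$, $\mathrm{Join}([s],a)$ maps $(t,y)\in\{s[k{:}]\}\times|a|$ to $\Downarrow$ if $a(y)(t(0))=\Downarrow$, else $(t[1{:}],a(y)(t(0)))$; iterates $g^{(1)}=g$, $g^{(k+1)}(z)=\Downarrow$ if $g^{(k)}(z)=\Downarrow$, else $g(g^{(k)}(z))$. $C_a(x)=\{s:\mathrm{Join}([s],a)^{(k)}(s,x)\ne\Downarrow\ \forall k\ge1\}$. A family $\mathcal F$ of safety constraints is a family with a universal detector if $\mathcal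 F=\{C_a(x):x\in|a|\}$ for some detector $a$. *)

(* Defs.v *)
From mathcomp Require Import all_boot.
From Stdlib Require Import ClassicalEpsilon.
Set Implicit Arguments. Unset Strict Implicit. Unset Printing Implicit Defensive.

Section Defs.
Variable N : finType.

Definition stream := nat -> N.

Definition safety (S : stream -> Prop) : Prop :=
  forall s : stream,
    (forall m : nat, exists s' : stream, S s' /\ (forall i, (i < m)%N -> s' i = s i)) ->
    S s.

(* detector with carrier X: a : X -> (1 + X)^N, None playing the role of the
   stop symbol (Downarrow). *)
Definition detector (X : Type) := X -> N -> option X.

Definition join (X : Type) (a : detector X) (z : stream * X) : option (stream * X) :=
  match a z.2 (z.1 0) with
  | None => None
  | Some y' => Some (fun n => z.1 n.+1, y')
  end.

(* iterates: g^(0) z = z (auxiliary), g^(k+1) z = Downarrow if g^(k) z = Downarrow,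
   else g (g^(k) z); for k >= 1 this is the paper's g^(k). *)
Fixpoint giter (Z : Type) (g : Z -> option Z) (k : nat) (z : Z) : option Z :=
  match k with
  | 0 => Some z
  | k'.+1 => match giter g k' z with None => None | Some z' => g z' end
  end.

Definition Cdet (X : Type) (a : detector X) (x : X) : stream -> Prop :=
  fun s => forall k : nat, (1 <= k)%N -> giter (join a) k (s, x) <> None.

(* prefix-free subsets of N^+ (words are lists; N^+ excludes the empty word) *)
Definition prefix_free (P : seq N -> Prop) : Prop :=
  ~ P [::] /\ (forall u v : seq N, P u -> P (u ++ v) -> v = [::]).

Definition Omega := { P : seq N -> Prop | prefix_free P }.

Definition lquot (n : N) (P : seq N -> Prop) : seq N -> Prop := fun u => P (n :: u).

Lemma lquot_prefix_free (P : Omega) (n : N) :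
  ~ proj1_sig P [:: n] -> prefix_free (lquot n (proj1_sig P)).
Proof.
case: P => P [P0 PP] /= Hn; split; first exact: Hn.
move=> u v Hu Huv; exact: (PP (n :: u) v Hu Huv).
Qed.

Definition omega : detector Omega :=
  fun P n =>
    match excluded_middle_informative (proj1_sig P [:: n]) with
    | left _ => None
    | right h => Some (exist _ (lquot n (proj1_sig P)) (lquot_prefix_free h))
    end.

End Defs.

(* Main.v *)
Require Import Defs.
From mathcomp Require Import all_boot.
From Stdlib Require Import ClassicalEpsilon FunctionalExtensionality PropExtensionality.
Set Implicit Arguments. Unset Strict Implicit. Unset Printing Implicit Defensive.

Section Aux.
Variable N : finType.

Fixpoint st (X : Type) (a : detector N X) (x : X) (s : stream N) (k : nat) : option X :=
  match k with
  | 0 => Some x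
  | k'.+1 => match st a x s k' with None => None | Some y => a y (s k') end
  end.

Lemma giter_st (X : Type) (a : detector N X) x s k :
  giter (join a) k (s, x) = omap (fun y => (fun n => s (k + n), y)) (st a x s k).
Proof.
elim: k => [|k IH] /=.
  by congr Some; congr pair; apply: functional_extensionality => n.
rewrite IH; case: (st a x s k) => [y|] //=.
rewrite /join /= addn0; case: (a y (s k)) => [y'|] //=.
congr Some; congr pair; apply: functional_extensionality => n.
by rewrite addSnnS.
Qed.

Lemma Cdet_st (X : Type) (a : detector N X) x s :
  Cdet a x s <-> forall k, st a x s k <> None.
Proof.
rewrite /Cdet; split => H k.
  case: k => [|k]; first by [].
  have := H k.+1 isT; rewrite giter_st.
  by case: (st a x s k.+1).
by move=> _; rewrite giter_st; have := H k; case: (st a x s k).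
Qed.

Lemma st_prefix (X : Type) (a : detector N X) x s s' k :
  (forall i, (i < k)%N -> s' i = s i) -> st a x s' k = st a x s k.
Proof.
elim: k => [|k IH] H //=.
rewrite IH; last by move=> i Hi; apply: H; apply: ltnW.
by rewrite H.
Qed.

Lemma Cdet_safety (X : Type) (a : detector N X) x : safety (Cdet a x).
Proof.
move=> s H; apply/Cdet_st => k.
have [s' [Hs' Hag]] := H k.
by rewrite -(st_prefix a x Hag); move: Hs' => /Cdet_st; apply.
Qed.

Definition rel2 (X Y : Type) (R : X -> Y -> Prop) (o1 : option X) (o2 : option Y) : Prop :=
  match o1, o2 with
  | None, None => True | Some x', Some y' => R x' y' | _, _ => False end.

Lemma bisim (X Y : Type) (a : detector N X) (b : detector N Y) (R : X -> Y -> Prop) :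
  (forall x y, R x y -> forall n, rel2 R (a x n) (b y n)) ->
  forall x y, R x y -> Cdet a x = Cdet b y.
Proof.
move=> HR x y Rxy.
have key : forall s k, rel2 R (st a x s k) (st b y s k).
  move=> s; elim => [|k IH] //=.
  move: IH; rewrite /rel2; case: (st a x s k) => [x'|]; case: (st b y s k) => [y'|] //.
  move=> H; exact (HR _ _ H (s k)).
apply: functional_extensionality => s; apply: propositional_extensionality.
rewrite !Cdet_st; split => H k; have := key s k; have := H k; rewrite /rel2;
  by case: (st a x s k); case: (st b y s k).
Qed.

Fixpoint Pa (X : Type) (a : detector N X) (x : X) (w : seq N) : Prop :=
  match w with
  | [::] => False
  | n :: w' => match a x n with None => w' = [::] | Some y => Pa a y w' end
  end.

Lemma Pa_pf (X : Type) (a : detector N X) x : prefix_free (Pa a x).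
Proof.
split => //.
move=> u v; elim: u x => [|n u IH] x //=.
case: (a x n) => [y|]; first exact: IH.
by move=> -> /=.
Qed.

Lemma omega_None (P : Omega N) n : omega P n = None <-> proj1_sig P [:: n].
Proof.
rewrite /omega; case: excluded_middle_informative => //.
Qed.

Lemma omega_Some (P : Omega N) n Q : omega P n = Some Q -> proj1_sig Q = lquot n (proj1_sig P).
Proof.
rewrite /omega; case: excluded_middle_informative => // h [<-] //.
Qed.

Lemma omega_case (P : Omega N) n :
  (omega P n = None /\ proj1_sig P [:: n]) \/
  (~ proj1_sig P [:: n] /\ exists Q, omega P n = Some Q /\ proj1_sig Q = lquot n (proj1_sig P)).
Proof.
case E: (omega P n) => [Q|].
  right; split; last by exists Q; split => //; apply: omega_Some.
  by move/omega_None; rewrite E.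
by left; split => //; apply/omega_None.
Qed.

End Aux.

Theorem mainTheorem16 (N : finType) (hN : (0 < #|N|)%N)
  (F : (stream N -> Prop) -> Prop) (hF : forall S, F S -> safety S) :
  (exists (X : Type) (a : detector N X),
      forall S : stream N -> Prop, F S <-> exists x : X, S = Cdet a x)
  <->
  (exists C : Omega N -> Prop,
      (forall P : Omega N, C P -> forall n : N,
         proj1_sig P [:: n] \/
         (exists Q : Omega N, C Q /\ proj1_sig Q = lquot n (proj1_sig P)))
      /\
      (forall S : stream N -> Prop, safety S ->
         (F S <-> exists P : Omega N, C P /\ S = Cdet (omega (N:=N)) P))).
Proof.
split.
- move=> [X [a HF]].
  have lq : forall x n y, a x n = Some y -> lquot n (Pa a x) = Pa a y.
    move=> x n y E; apply: functional_extensionality => u.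
    by rewrite /lquot /= E.
  have HR : forall x (P : Omega N), proj1_sig P = Pa a x -> forall n,
     rel2 (fun x' (y' : Omega N) => proj1_sig y' = Pa a x') (a x n) (omega P n).
    move=> x [p pp] /= HP n; subst p; have := omega_case (exist _ (Pa a x) pp) n; rewrite /rel2 /=.
    case E: (a x n) => [y|] [[-> H]|[H [Q [-> HQ]]]] //=.
    + by rewrite HQ (lq _ _ _ E).
  exists (fun P => exists x, proj1_sig P = Pa a x); split.
    move=> [p pp] [x /= HP] n; subst p => /=.
    case E: (a x n) => [y|]; last by left.
    right; exists (exist _ (Pa a y) (Pa_pf a y)); split; first by exists y.
    by rewrite /= (lq _ _ _ E).
  move=> S _; rewrite HF; split.
    move=> [x ->]; exists (exist _ (Pa a x) (Pa_pf a x)); split; first by exists x.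
    apply: (bisim (R := fun x (P : Omega N) => proj1_sig P = Pa a x)) => //.
  move=> [P [[x HP] ->]]; exists x; symmetry.
  apply: (bisim (R := fun x (P : Omega N) => proj1_sig P = Pa a x)) => //.
- move=> [C [HC HS]].
  pose X := {P : Omega N | C P}.
  have step : forall (x : X) n, ~ proj1_sig (proj1_sig x) [:: n] ->
      exists Q : X, proj1_sig (proj1_sig Q) = lquot n (proj1_sig (proj1_sig x)).
    move=> [P CP] n /= H; case: (HC P CP n) => // -[Q [CQ HQ]].
    by exists (exist _ Q CQ).
  pose a : detector N X := fun x n =>
    match excluded_middle_informative (proj1_sig (proj1_sig x) [:: n]) with
    | left _ => None
    | right h => Some (proj1_sig (constructive_indefinite_description _ (step x n h)))
    end.
  have Hb : forall (x : X), Cdet a x = Cdet (omega (N:=N)) (proj1_sig x).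
    move=> x0.
    apply: (bisim (R := fun (x : X) (P : Omega N) =>
                 proj1_sig (proj1_sig x) = proj1_sig P)) => // x P HP n.
    rewrite /rel2 /a; case: excluded_middle_informative => h;
      have := omega_case P n; rewrite -HP => -[[-> _]|[H [Q [-> HQ]]]] //.
    case: constructive_indefinite_description => y /= ->.
    by rewrite HQ.
  exists X, a => S; split.
    move=> FS; have [P [CP ->]] := (HS S (hF S FS)).1 FS.
    by exists (exist _ P CP); rewrite Hb.
  move=> [x ->]; rewrite Hb; have HS2 := HS _ (@Cdet_safety N _ (omega (N:=N)) (proj1_sig x)); apply HS2.
  by exists (proj1_sig x); split => //; apply: (proj2_sig x).
Qed.
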